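(* Let $r>1$ and $s>1$ be coprime integers. Suppose $G$ is a finite group containing elements $x$ and $y$ such that $x^r$ is conjugate to $y^r$ in $G$ and $x^s$ is conjugate to $y^s$ in $G$, but $x^d$ is not conjugate to $y^d$ in $G$ for every proper divisor $d$ of $r$ and every proper divisor $d$ of $s$. Then $|G|$ is divisible by $rs$ and $|G|\neq rs$. If $rs$ is even, then $|G|\neq 2rs$, and if $rs\equiv 2\pmod 4$, then $|G|$ is divisible by $2rs$.
   Context: A proper divisor of a positive integer $n$ is a positive divisor of $n$ strictly less than $n$. *)

(* Defs.v *)
From mathcomp Require Import all_boot all_fingroup.
Set Implicit Arguments. Unset Strict Implicit. Unset Printing Implicit Defensive.
Local Open Scope group_scope.

Definition conj_in (gT : finGroupType) (G : {set gT}) (a b : gT) : Prop :=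
  exists2 g, g \in G & a ^ g = b.

Definition proper_divisor (d n : nat) : Prop := (0 < d)%N /\ (d %| n)%N /\ (d < n)%N.

(* Main.v *)
Require Import Defs.
From mathcomp Require Import all_boot all_fingroup.
From mathcomp Require Import cyclic pgroup sylow zify.
Set Implicit Arguments. Unset Strict Implicit. Unset Printing Implicit Defensive.
Local Open Scope group_scope.
Lemma conj_pow (gT : finGroupType) (a b h : gT) (k d j : nat) :
  (#[a] %| d + j * k)%N -> (#[b] %| d + j * k)%N ->
  (a ^+ k) ^ h = b ^+ k -> (a ^+ d) ^ h = b ^+ d.
Proof.
have E (c : gT): (#[c] %| d + j * k)%N -> c ^+ d = ((c ^+ k) ^+ j)^-1.
  move=> dc; apply/eqP; rewrite eq_sym eq_invg_mul -expgM -expgD.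
  by rewrite -order_dvdn addnC mulnC.
move=> da db e; rewrite (E a da) (E b db) conjVg conjXg e //.
Qed.

Lemma conj_cop (gT : finGroupType) (a b h : gT) (k : nat) :
  coprime k #[a] -> coprime k #[b] -> (a ^+ k) ^ h = b ^+ k -> a ^ h = b.
Proof.
move=> ca cb e.
have m0 : (0 < #[a] * #[b])%N by rewrite muln_gt0 !order_gt0.
have [j _ dj] := Bezoutl k m0.
have g1 : gcdn (#[a] * #[b]) k = 1%N.
  by apply/eqP; rewrite -/(coprime _ _) coprimeMl ![coprime _ k]coprime_sym ca cb.
rewrite g1 in dj.
rewrite -(expg1 a) -(expg1 b); apply: (conj_pow (k:=k) (j:=j)) e.
  exact: dvdn_trans (dvdn_mulr _ _) dj.
exact: dvdn_trans (dvdn_mull _ _) dj.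
Qed.

Lemma keyK (r s : nat) (gT : finGroupType) (G : {group gT}) (x y : gT) :
  (0 < r)%N -> (0 < s)%N -> coprime r s ->
  conj_in G (x ^+ r) (y ^+ r) -> conj_in G (x ^+ s) (y ^+ s) ->
  (forall d, proper_divisor d r -> ~ conj_in G (x ^+ d) (y ^+ d)) ->
  (r %| #[x])%N.
Proof.
move=> r0 s0 crs [h Gh eh] [g Gg eg] nd.
set pi := \pi(r).
have cs (z : gT) : coprime s #[z.`_pi].
  rewrite coprime_sym; apply: (pnat_coprime (p_elt_constt _ _)).
  by rewrite -coprime_pi'.
have cr (z : gT) : coprime r #[z.`_pi^'].
  exact: (pnat_coprime (pnat_pi r0) (p_elt_constt _ _)).
have ug : x.`_pi ^ g = y.`_pi.
  apply: (conj_cop (cs x) (cs y)).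
  by rewrite -!consttX -consttJ eg.
have vh : x.`_pi^' ^ h = y.`_pi^'.
  by apply: (conj_cop (cr x) (cr y)); rewrite -!consttX -consttJ eh.
have uh : (x.`_pi ^+ r) ^ h = y.`_pi ^+ r by rewrite -!consttX -consttJ eh.
set d := gcdn #[x.`_pi] r.
have [j _ dj] := Bezoutl r (order_gt0 x.`_pi).
have ud : (x.`_pi ^+ d) ^ h = y.`_pi ^+ d.
  by apply: (conj_pow (j:=j) dj) uh; rewrite -ug orderJ.
have vd : (x.`_pi^' ^+ d) ^ h = y.`_pi^' ^+ d by rewrite conjXg vh.
have xd : (x ^+ d) ^ h = y ^+ d.
  by rewrite -(consttC pi (x ^+ d)) -(consttC pi (y ^+ d)) conjMg !consttX ud vd.
have dr : (d %| r)%N := dvdn_gcdr _ _.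
have d0 : (0 < d)%N by rewrite gcdn_gt0 order_gt0.
have : d = r.
  apply/eqP; rewrite eqn_leq dvdn_leq //= leqNgt; apply/negP => ltdr.
  by apply: (nd d); [split | exists h].
move=> edr; apply: dvdn_trans (order_dvdG (cycle_constt pi x)).
by rewrite -edr dvdn_gcdl.
Qed.

Lemma both (r s : nat) (gT : finGroupType) (x y h : gT) :
  (0 < r)%N -> (0 < s)%N -> coprime r s ->
  (x ^+ r) ^ h = y ^+ r -> (x ^+ s) ^ h = y ^+ s -> x ^ h = y.
Proof.
move=> r0 s0 crs eh eg.
set pi := \pi(r).
have cs (z : gT) : coprime s #[z.`_pi].
  rewrite coprime_sym; apply: (pnat_coprime (p_elt_constt _ _)).
  by rewrite -coprime_pi'.
have cr (z : gT) : coprime r #[z.`_pi^'].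
  exact: (pnat_coprime (pnat_pi r0) (p_elt_constt _ _)).
have ug : x.`_pi ^ h = y.`_pi.
  by apply: (conj_cop (cs x) (cs y)); rewrite -!consttX -consttJ eg.
have vh : x.`_pi^' ^ h = y.`_pi^'.
  by apply: (conj_cop (cr x) (cr y)); rewrite -!consttX -consttJ eh.
by rewrite -(consttC pi x) conjMg ug vh consttC.
Qed.

Lemma conj_comm (gT : finGroupType) (a b : gT) : commute a b -> a ^ b = a.
Proof. by move=> c; rewrite conjgE c mulKg. Qed.

Lemma ab_conj (r s : nat) (gT : finGroupType) (G : {group gT}) (x y : gT) :
  (0 < r)%N -> (0 < s)%N -> coprime r s -> abelian G -> x \in G -> y \in G ->
  conj_in G (x ^+ r) (y ^+ r) -> conj_in G (x ^+ s) (y ^+ s) ->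
  conj_in G x y.
Proof.
move=> r0 s0 crs ab Gx Gy [h Gh eh] [g Gg eg].
have cm (a b : gT) : a \in G -> b \in G -> commute a b.
  by move=> Ga Gb; apply: (centP ((subsetP ab) a Ga)).
rewrite conj_comm ?cm ?groupX // in eh.
rewrite conj_comm ?cm ?groupX // in eg.
exists 1; first exact: group1.
apply: (both r0 s0 crs); rewrite ?conjg1 //.
by apply: cm; rewrite ?groupX.
by apply: cm; rewrite ?groupX.
Qed.

Lemma rs_ord (r s : nat) (gT : finGroupType) (G : {group gT}) (x y : gT) :
  (0 < r)%N -> (0 < s)%N -> coprime r s ->
  conj_in G (x ^+ r) (y ^+ r) -> conj_in G (x ^+ s) (y ^+ s) ->
  (forall d, proper_divisor d r -> ~ conj_in G (x ^+ d) (y ^+ d)) ->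
  (forall d, proper_divisor d s -> ~ conj_in G (x ^+ d) (y ^+ d)) ->
  (r * s %| #[x])%N.
Proof.
move=> r0 s0 crs cr cs ndr nds.
rewrite Gauss_dvd // (keyK r0 s0 crs cr cs ndr) /=.
by apply: (keyK s0 r0 _ cs cr nds); rewrite coprime_sym.
Qed.

Lemma full_ab (gT : finGroupType) (G : {group gT}) (x : gT) :
  x \in G -> #|G| = #[x] -> abelian G.
Proof.
move=> Gx oG.
have /eqP <- : <[x]> == G :> {set gT}.
  by rewrite eqEcard cycle_subG Gx oG /=.
exact: cycle_abelian.
Qed.

Lemma p3 (r s : nat) (gT : finGroupType) (G : {group gT}) (x y : gT) :
  (1 < r)%N -> (0 < s)%N -> coprime r s -> x \in G -> y \in G ->
  conj_in G (x ^+ r) (y ^+ r) -> conj_in G (x ^+ s) (y ^+ s) ->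
  (forall d, proper_divisor d r -> ~ conj_in G (x ^+ d) (y ^+ d)) ->
  (forall d, proper_divisor d s -> ~ conj_in G (x ^+ d) (y ^+ d)) ->
  ~~ odd r -> #|G| <> (2 * (r * s))%N.
Proof.
move=> r1 s0 crs Gx Gy cr cs ndr nds er oG.
have r0 : (0 < r)%N by apply: ltnW.
have nc : ~ conj_in G x y.
  by rewrite -[x]expg1 -[y]expg1; apply: ndr; do !split.
have rsx := rs_ord r0 s0 crs cr cs ndr nds.
have xG : (#[x] %| 2 * (r * s))%N by rewrite -oG order_dvdG.
have [q eq] := dvdnP rsx.
have q2 : (q %| 2)%N.
  by rewrite -(@dvdn_pmul2r (r * s)) ?muln_gt0 ?r0 // -eq.
have ox : #[x] = (r * s)%N.
  move: q2 eq; case: q => [|[|[|q]]] //; first by rewrite mul1n.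
  move=> _ eq; exfalso; apply: nc; apply: (ab_conj r0 s0 crs _ Gx Gy cr cs).
  by apply: (full_ab Gx); rewrite oG eq mulnC.
have iX : #|G : <[x]>| = 2%N.
  rewrite -divgS ?cycle_subG //.
  have ox' : #|<[x]>| = (r * s)%N := ox.
  by rewrite oG ox' mulnK // muln_gt0 r0.
have nX : <[x]> <| G by apply: index2_normal; rewrite ?cycle_subG.
case: cr => h Gh eh; case: cs => g Gg eg.
set pi := \pi(r).
have csp (z : gT) : coprime s #[z.`_pi].
  rewrite coprime_sym; apply: (pnat_coprime (p_elt_constt _ _)).
  by rewrite -coprime_pi'.
have crp (z : gT) : coprime r #[z.`_pi^'].
  exact: (pnat_coprime (pnat_pi r0) (p_elt_constt _ _)).
have ug : x.`_pi ^ g = y.`_pi.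
  by apply: (conj_cop (csp x) (csp y)); rewrite -!consttX -consttJ eg.
have vh : x.`_pi^' ^ h = y.`_pi^'.
  by apply: (conj_cop (crp x) (crp y)); rewrite -!consttX -consttJ eh.
set e := (r %/ 2)%N.
have re : r = (e * 2)%N by rewrite divnK // dvdn2.
set k := h * g^-1.
have Gk : k \in G by rewrite groupM ?groupV.
have xk : x ^ k \in <[x]>.
  by rewrite memJ_norm ?cycle_id // (subsetP (normal_norm nX)).
have [t xt] := cycleP _ _ xk.
have t_odd : odd t.
  have := orderJ x k; rewrite xt orderXgcd => og.
  have g1 : gcdn #[x] t = 1%N.
    have xp : (0 < #[x])%N := order_gt0 x.
    have := divnK (dvdn_gcdl #[x] t); rewrite og => E.
    apply/eqP; rewrite -(eqn_pmul2l xp) muln1; exact/eqP.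
  apply: contraLR isT => tev.
  have : (2 %| gcdn #[x] t)%N.
    rewrite dvdn_gcd (dvdn2 t) tev andbT.
    apply: dvdn_trans rsx; apply: dvdn_mulr; by rewrite dvdn2.
  by rewrite g1.
have u2 : (x.`_pi ^+ e) ^+ 2 = 1.
  apply/eqP; rewrite -expgM -re -order_dvdn.
  have : (#[x.`_pi] %| r * s)%N.
    rewrite -ox; exact: (order_dvdG (cycle_constt pi x)).
  by rewrite Gauss_dvdl // coprime_sym csp.
have uek : (x.`_pi ^+ e) ^ k = x.`_pi ^+ e.
  have : x.`_pi ^+ e \in <[x]> by rewrite groupX ?cycle_constt.
  case/cycleP => j ej; rewrite ej in u2 *.
  rewrite conjXg xt -expgM mulnC expgM.
  have -> : (x ^+ j) ^+ t = (x ^+ j) ^+ (t %/ 2 * 2 + t %% 2) by rewrite -divn_eq.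
  by rewrite expgD modn2 t_odd expg1 mulnC expgM u2 expg1n mul1g.
have hk : h = k * g by rewrite /k mulgKV.
have xe : (x ^+ e) ^ h = y ^+ e.
  rewrite -(consttC pi (x ^+ e)) -(consttC pi (y ^+ e)) conjMg !consttX.
  by rewrite {1}hk conjgM uek (conjXg x.`_pi) (conjXg x.`_pi^') ug vh.
have e0 : (0 < e)%N by move: r1; rewrite re; case: (e).
apply: (ndr e); last by exists h.
split; first exact: e0.
by rewrite re dvdn_mulr // ltn_Pmulr.
Qed.

Lemma small2 (n k : nat) : ~~ (4 %| n)%N -> (2 ^ k %| n)%N -> (k <= 1)%N.
Proof.
move=> n4 kn; rewrite leqNgt; apply/negP => k2.
by move/negP: n4; apply; apply: dvdn_trans kn; apply: (@dvdn_exp2l 2 2 k).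
Qed.

Lemma ord2 (gT : finGroupType) (G : {group gT}) (z : gT) :
  ~~ (4 %| #|G|)%N -> z \in G -> ~~ odd #[z] -> #[z.`_2] = 2%N.
Proof.
move=> n4 Gz ez.
rewrite order_constt p_part.
have zG : (#[z] %| #|G|)%N := order_dvdG Gz.
have k1 : (logn 2 #[z] <= 1)%N.
  apply: (small2 n4); apply: dvdn_trans zG; rewrite -p_part; exact: dvdn_part.
have k0 : (0 < logn 2 #[z])%N by rewrite logn_gt0 mem_primes /= order_gt0 dvdn2 ez.
by have -> : logn 2 #[z] = 1%N by apply/eqP; rewrite eqn_leq k1 k0.
Qed.

Lemma inv2 (gT : finGroupType) (G : {group gT}) (a b g : gT) :
  ~~ (4 %| #|G|)%N -> a \in G -> b \in G -> g \in G ->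
  ~~ odd #[a] -> ~~ odd #[b] -> (a ^+ 2) ^ g = b ^+ 2 -> conj_in G a b.
Proof.
move=> n4 Ga Gb Gg ea eb e.
have cp (z : gT) : coprime 2 #[z.`_2^'].
  exact: (pnat_coprime (pnat_id (isT : prime 2)) (p_elt_constt _ _)).
have vg : a.`_2^' ^ g = b.`_2^'.
  by apply: (conj_cop (cp a) (cp b)); rewrite -!consttX -consttJ e.
set w := b.`_2^'.
have cc (z : gT) : commute z.`_2 z.`_2^'.
  apply: (centP ((subsetP (cycle_abelian z)) _ (cycle_constt _ z))).
  exact: cycle_constt.
have inG (z : gT) (pi : nat_pred) : z \in G -> z.`_pi \in G.
  move=> Gz; have : <[z]> \subset G by rewrite cycle_subG.
  by move/subsetP; apply; exact: cycle_constt.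
set H := 'C_G[w].
have a2H : a.`_2 ^ g \in H.
  rewrite inE groupJ ?inG //=; apply/cent1P; rewrite /w -vg /commute -!conjMg.
  by rewrite (cc a).
have b2H : b.`_2 \in H by rewrite inE inG //=; apply/cent1P; exact: cc.
have [P sylP] := Sylow_exists 2 H.
have HG : (#|H| %| #|G|)%N by apply: cardSg; apply: subsetIl.
have [m Pm] := p_natP (pHall_pgroup sylP).
have m1 : (m <= 1)%N.
  apply: (small2 n4); rewrite -Pm; apply: dvdn_trans HG; exact: cardSg (pHall_sub sylP).
have syl (z : gT) : z \in H -> #[z] = 2%N -> exists2 c, c \in H & <[z]> :^ c = P.
  move=> Hz oz.
  have pz : 2.-group <[z]>.
    rewrite /pgroup; have -> : #|<[z]>| = 2%N := oz; exact: pnat_id.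
  have [c Hc sP] := Sylow_Jsub sylP (etrans (cycle_subG z H) Hz) pz.
  exists c => //; apply/eqP; rewrite eqEcard sP /= cardJg Pm.
  have -> : #|<[z]>| = 2%N := oz.
  by move: m1; case: (m) => [|[|]].
have oa2 : #[a.`_2 ^ g] = 2%N by rewrite orderJ (ord2 n4 Ga ea).
have ob2 : #[b.`_2] = 2%N by rewrite (ord2 n4 Gb eb).
have [c1 Hc1 E1] := syl _ a2H oa2.
have [c2 Hc2 E2] := syl _ b2H ob2.
have Hc : c1 * c2^-1 \in H by rewrite groupM ?groupV.
have zin : (a.`_2 ^ g) ^ (c1 * c2^-1) \in <[b.`_2]>.
  by rewrite -[<[b.`_2]>](conjsgK c2) E2 -E1 -conjsgM memJ_conjg cycle_id.
have zb : (a.`_2 ^ g) ^ (c1 * c2^-1) = b.`_2.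
  case/cycleP: zin => i zi; rewrite zi -expg_mod_order ob2.
  move: (oa2); rewrite -(orderJ _ (c1 * c2^-1)) zi -expg_mod_order ob2.
  have : (i %% 2 < 2)%N by rewrite ltn_mod.
  case: (i %% 2)%N => [|[|]] //; first by rewrite expg0 order1.
have Hsub : H \subset G by apply: subsetIl.
exists (g * (c1 * c2^-1)); first by rewrite groupM // (subsetP Hsub).
rewrite -{1}(consttC 2 a) conjMg conjgM zb conjgM vg.
have cw : commute w (c1 * c2^-1).
  apply: commute_sym; apply/cent1P; move: Hc; rewrite inE; case/andP => _ ->.
  done.
by rewrite (conj_comm cw) consttC.
Qed.
Lemma arith4 (n r s e : nat) : r = (e*2)%N -> odd e -> odd s -> (r * s %| n)%N -> ~~ (2 * (r * s) %| n)%N -> ~~ (4 %| n)%N.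
Proof.
move=> re oe os h1 h2. have [q nq] := dvdnP h1. rewrite nq in h2 *.
have p : (0 < r * s)%N by rewrite re !muln_gt0; case: (e) oe; case: (s) os.
rewrite dvdn_pmul2r // dvdn2 negbK in h2.
have -> : (q * (r * s) = 2 * (q * e * s))%N by rewrite re; lia.
by rewrite (_ : 4 = 2 * 2)%N // dvdn_pmul2l // dvdn2 !oddM h2 oe os.
Qed.

Lemma conj_sym (gT : finGroupType) (G : {group gT}) (a b : gT) :
  conj_in G a b -> conj_in G b a.
Proof. by case=> g Gg <-; exists g^-1; rewrite ?groupV ?conjgK. Qed.

Lemma rs_ord_y (r s : nat) (gT : finGroupType) (G : {group gT}) (x y : gT) :
  (0 < r)%N -> (0 < s)%N -> coprime r s ->
  conj_in G (x ^+ r) (y ^+ r) -> conj_in G (x ^+ s) (y ^+ s) ->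
  (forall d, proper_divisor d r -> ~ conj_in G (x ^+ d) (y ^+ d)) ->
  (forall d, proper_divisor d s -> ~ conj_in G (x ^+ d) (y ^+ d)) ->
  (r * s %| #[y])%N.
Proof.
move=> r0 s0 crs cr cs ndr nds.
apply: (rs_ord (x := y) (y := x) r0 s0 crs (conj_sym cr) (conj_sym cs)).
  by move=> d pd /conj_sym; apply: ndr.
by move=> d pd /conj_sym; apply: nds.
Qed.

Lemma p4 (r s : nat) (gT : finGroupType) (G : {group gT}) (x y : gT) :
  (1 < r)%N -> (0 < s)%N -> coprime r s -> x \in G -> y \in G ->
  conj_in G (x ^+ r) (y ^+ r) -> conj_in G (x ^+ s) (y ^+ s) ->
  (forall d, proper_divisor d r -> ~ conj_in G (x ^+ d) (y ^+ d)) ->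
  (forall d, proper_divisor d s -> ~ conj_in G (x ^+ d) (y ^+ d)) ->
  ((r * s) %% 4 = 2)%N -> ~~ odd r -> (2 * (r * s) %| #|G|)%N.
Proof.
move=> r1 s0 crs Gx Gy cr cs ndr nds m4 er.
have r0 : (0 < r)%N by apply: ltnW.
have rsx := rs_ord r0 s0 crs cr cs ndr nds.
have rsy := rs_ord_y r0 s0 crs cr cs ndr nds.
have rsG : (r * s %| #|G|)%N := dvdn_trans rsx (order_dvdG Gx).
set e := (r %/ 2)%N.
have re : r = (e * 2)%N by rewrite divnK // dvdn2.
have oes : odd (e * s).
  apply/negP => /negP; rewrite -dvdn2 => /dvdnP [m em].
  by move: m4; rewrite re mulnAC em -mulnA modnMl.
move: oes; rewrite oddM => /andP [oe os].
apply/negPn/negP => h2.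
have n4 := arith4 re oe os rsG h2.
have nodd (z : gT) : (r * s %| #[z])%N -> ~~ odd #[z ^+ e].
  move=> rz; apply/negP => oz.
  have : (#[z] %| e * #[z ^+ e])%N by rewrite order_dvdn expgM expg_order.
  have : (2 %| #[z])%N.
    by apply: dvdn_trans rz; apply: dvdn_mulr; rewrite dvdn2.
  move=> t2 t3; have := dvdn_trans t2 t3; by rewrite dvdn2 oddM oe oz.
case: cr => h Gh eh.
have e2 : ((x ^+ e) ^+ 2) ^ h = (y ^+ e) ^+ 2 by rewrite -!expgM -re.
have cxy := inv2 n4 (groupX e Gx) (groupX e Gy) Gh (nodd x rsx) (nodd y rsy) e2.
apply: (ndr e) cxy; split; first by case: (e) oe.
by rewrite re dvdn_mulr // ltn_Pmulr // ; case: (e) oe.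
Qed.

Theorem theorem6p6 (r s : nat) (gT : finGroupType) (G : {group gT}) (x y : gT) :
  (1 < r)%N -> (1 < s)%N -> coprime r s ->
  x \in G -> y \in G ->
  conj_in G (x ^+ r) (y ^+ r) -> conj_in G (x ^+ s) (y ^+ s) ->
  (forall d, proper_divisor d r -> ~ conj_in G (x ^+ d) (y ^+ d)) ->
  (forall d, proper_divisor d s -> ~ conj_in G (x ^+ d) (y ^+ d)) ->
  [/\ (r * s %| #|G|)%N, #|G| <> (r * s)%N,
      (~~ odd (r * s) -> #|G| <> (2 * (r * s))%N)
    & ((r * s) %% 4 = 2 -> (2 * (r * s) %| #|G|)%N)].
Proof.
move=> r1 s1 crs Gx Gy cr cs ndr nds.
have r0 : (0 < r)%N by apply: ltnW.
have s0 : (0 < s)%N by apply: ltnW.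
have csr : coprime s r by rewrite coprime_sym.
have rsx := rs_ord r0 s0 crs cr cs ndr nds.
have xG := order_dvdG Gx.
split.
- exact: dvdn_trans rsx xG.
- move=> oG; have pd1 : proper_divisor 1%N r by do !split.
  have := ndr 1%N pd1; apply; rewrite !expg1; apply: (ab_conj r0 s0 crs _ Gx Gy cr cs).
  apply: (full_ab Gx); apply/eqP.
  rewrite eqn_leq (dvdn_leq (cardG_gt0 G) xG) andbT oG.
  exact: dvdn_leq (order_gt0 x) rsx.
- rewrite oddM negb_and => /orP [er | es].
    exact: (p3 r1 s0 crs Gx Gy cr cs ndr nds er).
  rewrite (mulnC r s); exact: (p3 s1 r0 csr Gx Gy cs cr nds ndr es).
- move=> m4.
  have : ~~ odd (r * s).
    by rewrite (divn_eq (r * s) 4) m4 oddD oddM andbF.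
  rewrite oddM negb_and => /orP [er | es].
    exact: (p4 r1 s0 crs Gx Gy cr cs ndr nds m4 er).
  rewrite (mulnC r s) in m4 *.
  exact: (p4 s1 r0 csr Gx Gy cs cr nds ndr m4 es).
Qed.
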